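(* Assume the network is regular. Define a relation $\approx$ on $\mathcal E$ by $j_1\approx j_2$ iff $j_1=j_2$, or ($j_1\leadsto j_2$ and $j_2\leadsto j_1$). Then: (a) $\approx$ is an equivalence relation on $\mathcal E$. (b) If $\varphi$ is an equivalence class with at least two elements, then $j\leadsto j'$ for all $j,j'\in\varphi$ (including $j=j'$). (c) If $j_1\leadsto j_2$ and $j_1\not\approx j_2$, then for all $j_1'\approx j_1$ and $j_2'\approx j_2$ one has $j_1'\leadsto j_2'$ and $j_2'\not\leadsto j_1'$. Consequently, the relation on equivalence classes ''$\varphi\prec\varphi'$ iff $\varphi\neq\varphi'$ and some element of $\varphi$ influences some element of $\varphi'$'' is a strict partial order, and for $j^*\in\varphi^*$, $j'\ne j^*$: $j^*\leadsto j'$ iff $j'\in\varphi^*$ or $\varphi^*\prec\varphi'$, where $\varphi'$ is the class of $j'$. (d) For $j\in\mathcal E$ let $I_{\mathcal M}(j)=\{m\in\mathcal M: j\leadsto m\}$. If $j_1\leadsto j_2$ then $I_{\mathcal M}(j_1)\supseteq I_{\mathcal M}(j_2)$; if $j_1\approx j_2$ then $I_{\mathcal M}(j_1)=I_{\mathcal M}(j_2)$. (e) For $j^*\in\mathcal E$ with class $\varphi^*$, let $\mathcal M^{\neg d}(j^* )=\{m'\in\mathcal M:\ j^*\leadsto j'\leadsto m' \text{ for some } j'\notin\varphi^*\}$ and $\mathcal M^d(j^* )=I_{\mathcal M}(j^* )\setminus\mathcal M^{\neg d}(j^* )$. Then $\mathcal M^{\neg d}(j^* )\subseteq I_{\mathcal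 M}(j^* )$, and $j^*\leadsto m'$ iff either $m'\in\mathcal M^d(j^* )$, or $m'\in\mathcal M^d(j')$ for some $j'\notin\varphi^*$ with $j^*\leadsto j'$; i.e. $I_{\mathcal M}(j^* )=\mathcal M^d(j^* )\cup\bigcup_{j^*\leadsto j'\notin\varphi^*}\mathcal M^d(j')$.
   Context: A reaction network consists of a finite set of metabolites $\mathcal M=\{1,\dots,M\}$ and a finite set of reactions $\mathcal E=\{1,\dots,E\}$. Each reaction $j$ has an input stoichiometric vector $y^j\in\mathbb R_{\ge0}^M$ and an output stoichiometric vector $\bar y^j\in\mathbb R_{\ge0}^M$. Write $m\vdash j$ iff $y^j_m\neq 0$. The stoichiometric matrix $S$ is the real $M\times E$ matrix whose $j$-th column is $S^j=\bar y^j-y^j$; it is assumed to have full rank $M$. The rate matrix $R=(r_{jm})$ is the $E\times M$ matrix whose entries $r_{jm}$ with $m\vdash j$ are independent indeterminates, and $r_{jm}=0$ whenever $m\not\vdash j$. ''Nonzero algebraically'' means nonzero as a polynomial/rational function in these indeterminates. The network is regular if $\det(SR)\ne0$ algebraically. Let $B=\begin{pmatrix}-\mathrm{id}_{\mathcal E}&R\\ S&0\end{pmatrix}$, a square matrix with rows and columns indexed by the disjoint union $\mathcal E\sqcup\mathcal M$; for a regular network it is invertible over the field of rational functions in the $r_{jm}$. For $\alpha\in\mathcal E\sqcup\mathcal M$ set $z^\alpha=-B^{-1}e_\alpha$, and write $\alpha\leadsto\beta$ for $\beta\in\mathcal E\sqcup\mathcal M$ if $z^\alpha_\beta$ is nonzero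 algebraically. *)

(* Defs.v *)
From HB Require Import structures.
From mathcomp Require Import all_boot all_order all_algebra.
Set Implicit Arguments. Unset Strict Implicit. Unset Printing Implicit Defensive.
Import Order.TTheory GRing.Theory Num.Theory.
Local Open Scope ring_scope.

(* Polynomial ring in n indeterminates over an integral domain R,
   built as iterated univariate polynomials: R[X_0][X_1]...[X_(n-1)]. *)
Fixpoint mpoly (R : idomainType) (n : nat) : idomainType :=
  match n with
  | 0 => R
  | n'.+1 => GRing.IntegralDomain.clone {poly (mpoly R n')} _
  end.

(* The k-th indeterminate X_k (k < n); X_k = 0 if k >= n, never used. *)
Fixpoint mvar (R : idomainType) (n : nat) (k : nat) : mpoly R n :=
  match n return mpoly R n with
  | 0 => 0
  | n'.+1 => if k == n' then 'X else (mvar R n' k)%:P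
  end.

Fixpoint mconst (R : idomainType) (n : nat) (c : R) : mpoly R n :=
  match n return mpoly R n with
  | 0 => c
  | n'.+1 => (mconst n' c)%:P
  end.

Section Network.
Variables (R : realFieldType) (M E : nat).
(* y m j = y^j_m (input stoichiometry), ybar m j = ybar^j_m (output). *)
Variables (y ybar : 'M[R]_(M, E)).

Definition stoich : 'M[R]_(M, E) := ybar - y.

Definition inputs (m : 'I_M) (j : 'I_E) : bool := y m j != 0.

(* number of indeterminates: one r_{jm} for each pair (j,m), indexed j*M+m *)
Definition nvars : nat := (E * M)%N.

Definition ratfun : fieldType := {fraction (mpoly R nvars)}.

Definition toK (p : mpoly R nvars) : ratfun := FracField.tofrac p.

Definition rate : 'M[ratfun]_(E, M) :=
  \matrix_(j < E, m < M)
    (if inputs m j then toK (mvar R nvars (j * M + m)%N) else 0).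

Definition stoichK : 'M[ratfun]_(M, E) :=
  map_mx (fun c => toK (mconst nvars c)) stoich.

Definition regular : bool := \det (stoichK *m rate) != 0.

Definition Bmat : 'M[ratfun]_(E + M) := block_mx (- 1%:M) rate stoichK 0.

Definition rxn (j : 'I_E) : 'I_(E + M) := lshift M j.
Definition met (m : 'I_M) : 'I_(E + M) := rshift E m.

Definition zvec (a : 'I_(E + M)) : 'cV[ratfun]_(E + M) :=
  - (invmx Bmat *m delta_mx a (0 : 'I_1)).

Definition influences (a b : 'I_(E + M)) : bool := zvec a b 0 != 0.

Definition inflEE (j1 j2 : 'I_E) : bool := influences (rxn j1) (rxn j2).
Definition inflEM (j : 'I_E) (m : 'I_M) : bool := influences (rxn j) (met m).

Definition approx (j1 j2 : 'I_E) : bool :=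
  (j1 == j2) || (inflEE j1 j2 && inflEE j2 j1).

Definition eclass (j : 'I_E) : {set 'I_E} := [set j' | approx j j'].

Definition prec (phi phi' : {set 'I_E}) : bool :=
  (phi != phi') && [exists j in phi, exists j' in phi', inflEE j j'].

Definition IM (j : 'I_E) : {set 'I_M} := [set m | inflEM j m].

Definition Mnd (js : 'I_E) : {set 'I_M} :=
  [set m | [exists j', [&& j' \notin eclass js, inflEE js j' & inflEM j' m]]].

Definition Md (js : 'I_E) : {set 'I_M} := IM js :\: Mnd js.

End Network.

(* Main.v *)
Require Import Defs.
From HB Require Import structures.
From mathcomp Require Import all_boot all_order all_algebra.
From mathcomp Require Import zify.
Import Order.TTheory GRing.Theory Num.Theory.
Local Open Scope ring_scope.

Section Deriv.
Variable R : idomainType.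

Fixpoint dv (n k : nat) : mpoly R n -> mpoly R n :=
  match n return mpoly R n -> mpoly R n with
  | 0 => fun _ => 0
  | n'.+1 => fun p => if k == n' then (deriv (p : {poly mpoly R n'}) : mpoly R n'.+1)
              else (map_poly (dv n' k) (p : {poly mpoly R n'}) : mpoly R n'.+1)
  end.

Lemma dv0 n k : dv n k 0 = 0.
Proof.
elim: n => [//|n IH] /=; case: (k == n).
  exact: (@deriv0 (mpoly R n)).
apply/polyP => i; rewrite coef_map_id0 // coef0 IH //.
Qed.

Lemma dvD n k p q : dv n k (p + q) = dv n k p + dv n k q.
Proof.
elim: n p q => [|n IH] p q /=; first by rewrite addr0.
case: (k == n); first exact: (@derivD (mpoly R n)).
apply/polyP => i; rewrite coefD !coef_map_id0 ?dv0 // coefD IH //.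
Qed.

Lemma dvN n k p : dv n k (- p) = - dv n k p.
Proof. by apply/eqP; rewrite -addr_eq0 -dvD addNr dv0. Qed.

Lemma dv_sum n k (I : finType) (F : I -> mpoly R n) :
  dv n k (\sum_i F i) = \sum_i dv n k (F i).
Proof.
apply: (big_ind2 (fun a b => dv n k a = b)); [exact: dv0| |by []].
by move=> a b c d <- <-; rewrite dvD.
Qed.

Lemma dv_sum_ord n k m (F : 'I_m -> mpoly R n) :
  dv n k (\sum_(i < m) F i) = \sum_(i < m) dv n k (F i).
Proof. exact: dv_sum. Qed.

Lemma dvM n k p q : dv n k (p * q) = dv n k p * q + p * dv n k q.
Proof.
elim: n p q => [|n IH] p q /=; first by rewrite mul0r mulr0 addr0.
case: (k == n); first exact: (@derivM (mpoly R n)).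
apply/polyP => i.
rewrite coef_map_id0 ?dv0 // coefD !coefM dv_sum_ord -big_split /=.
apply: eq_bigr => j _; rewrite IH !coef_map_id0 ?dv0 //.
Qed.

Lemma dv1 n k : dv n k 1 = 0.
Proof.
have := dvM n k 1 1; rewrite !mul1r mulr1 => h.
by apply: (addrI (dv n k 1)); rewrite addr0 -h.
Qed.

Lemma dv_const n k (c : R) : dv n k (mconst n c) = 0.
Proof.
elim: n => [//|n IH] /=; case: (k == n).
  exact: (@derivC (mpoly R n)).
by apply/polyP => i; rewrite coef_map_id0 ?dv0 // !coefC; case: (i == 0)%N; rewrite ?IH ?dv0.
Qed.

Lemma dv_var n k k' : (k < n)%N -> (k' < n)%N ->
  dv n k (mvar R n k') = if k' == k then 1 else 0.
Proof.
elim: n => [//|n IH] hk hk'.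
rewrite [dv _ _ _]/= [mvar _ _ _]/=.
case: (eqVneq k n) => [ekn|hkn].
  subst k; case: (eqVneq k' n) => [ekn|hk'n].
    subst k'; exact: (@derivX (mpoly R n)).
  exact: (@derivC (mpoly R n)).
have hk2 : (k < n)%N by rewrite ltn_neqAle hkn -ltnS.
case: (eqVneq k' n) => [ek'|hk'n].
  subst k'; rewrite ifF; last by apply/eqP => e; move: hkn; rewrite e eqxx.
  apply/polyP => i; rewrite coef_map_id0 ?dv0 // coefX coef0.
  by case: (i == 1)%N; rewrite ?dv1 ?dv0.
have hk'2 : (k' < n)%N by rewrite ltn_neqAle hk'n -ltnS.
apply/polyP => i; rewrite coef_map_id0 ?dv0 // coefC.
case: i => [|i]; rewrite /= ?IH // ?dv0; case: (k' == k); rewrite ?coef1 ?coef0 //.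
Qed.
End Deriv.

Section MxDeriv.
Variable P : comRingType.
Variable d : P -> P.
Hypothesis d0 : d 0 = 0.
Hypothesis dD : forall a b, d (a + b) = d a + d b.
Hypothesis dM : forall a b, d (a * b) = d a * b + a * d b.

Lemma d_sum (I : finType) (F : I -> P) : d (\sum_i F i) = \sum_i d (F i).
Proof.
apply: (big_ind2 (fun a b => d a = b)); [exact: d0| |by []].
by move=> a b c e <- <-; rewrite dD.
Qed.

Lemma DmM m n p (X : 'M[P]_(m, n)) (Y : 'M[P]_(n, p)) :
  map_mx d (X *m Y) = map_mx d X *m Y + X *m map_mx d Y.
Proof.
apply/matrixP => i j; rewrite !mxE d_sum -big_split /=.
by apply: eq_bigr => k _; rewrite dM !mxE.
Qed.

Lemma mul_delta_entry m n p (X : 'M[P]_(m, n)) (a : 'I_n) (b : 'I_p) i l :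
  (X *m delta_mx a b) i l = X i a * (l == b)%:R.
Proof.
rewrite mxE (bigD1 a) //= big1 ?addr0 => [|k nk]; rewrite mxE ?eqxx //.
by rewrite (negbTE nk) mulr0.
Qed.

Lemma mul_delta_entry2 m n p (X : 'M[P]_(m, n)) (Y : 'M[P]_(n, p)) a b i j :
  (X *m delta_mx a b *m Y) i j = X i a * Y b j.
Proof.
rewrite mxE (bigD1 b) //= big1 ?addr0 => [|k nk]; rewrite mul_delta_entry ?eqxx.
  by rewrite mulr1.
by rewrite (negbTE nk) mulr0 mul0r.
Qed.

Lemma adj_deriv n (A : 'M[P]_n) (a b : 'I_n) :
  map_mx d A = delta_mx a b -> forall i j, \adj A i j = 0 ->
  \adj A i a * \adj A b j = 0.
Proof.
move=> hA i j h0.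
have h1 := mul_adj_mx A.
have h2 : map_mx d (\adj A) *m A + \adj A *m delta_mx a b = (d (\det A))%:M.
  rewrite -hA -DmM h1; apply/matrixP => u v; rewrite !mxE.
  by case: (u == v); rewrite ?mulr1n ?mulr0n.
have h3 := congr1 (fun X => (X *m \adj A) i j) h2.
move: h3; rewrite /= mulmxDl -[_ *m A *m _]mulmxA mul_mx_adj mul_mx_scalar mul_scalar_mx.
rewrite [in X in X = _]mxE mul_delta_entry2 !mxE; move: h0; rewrite mxE => ->.
by rewrite d0 !mulr0 add0r.
Qed.
End MxDeriv.

Section Net.
Variables (R : realFieldType) (M E : nat) (y ybar : 'M[R]_(M, E)).
Local Notation P := (mpoly R (nvars M E)).
Local Notation tf := (@FracField.tofrac P).

Definition rateP : 'M[P]_(E, M) :=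
  \matrix_(j < E, m < M)
    (if inputs y m j then mvar R (nvars M E) (j * M + m)%N else 0).
Definition stoichP : 'M[P]_(M, E) := map_mx (mconst (nvars M E)) (stoich y ybar).
Definition Bp : 'M[P]_(E + M) := block_mx (- 1%:M) rateP stoichP 0.

Lemma Bmat_eq : Bmat y ybar = map_mx tf Bp.
Proof.
rewrite /Bmat /Bp map_block_mx map_mxN map_mx1 map_mx0; congr block_mx.
  by apply/matrixP => j m; rewrite !mxE; case: ifP; rewrite ?rmorph0.
by apply/matrixP => j m; rewrite !mxE.
Qed.

Lemma detB_neq0 : regular y ybar -> \det (Bmat y ybar) != 0.
Proof.
move=> reg.
have -> : Bmat y ybar = block_mx 1%:M 0 (- stoichK y ybar) 1%:M *m
              block_mx (- 1%:M) (rate y) 0 (stoichK y ybar *m rate y).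
  rewrite mulmx_block !mul1mx !mul0mx !addr0 ?add0r mulmxN mulmx1 opprK mulNmx addNr.
  by [].
rewrite det_mulmx det_lblock det_ublock !det1 mul1r -(raddfN (@scalar_mx _ E)) det_scalar mul1r.
by rewrite mulf_neq0 // expf_neq0 // oppr_eq0 oner_eq0.
Qed.

Lemma infl_adj a b : regular y ybar ->
  influences y ybar a b = (\adj Bp b a != 0).
Proof.
move=> reg; have dn := detB_neq0 reg.
rewrite /influences /zvec mxE mul_delta_entry eqxx mulr1 oppr_eq0.
rewrite /invmx unitmxE unitfE dn mxE mulf_eq0 invr_eq0 (negbTE dn) /=.
rewrite Bmat_eq -map_mx_adj mxE.
exact (f_equal negb (@tofrac_eq0 P _)).
Qed.

Lemma idx_lt (j : 'I_E) (m : 'I_M) : (j * M + m < nvars M E)%N.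
Proof. rewrite /nvars; have := ltn_ord j; have := ltn_ord m; nia. Qed.

Lemma idx_eq (j j' : 'I_E) (m m' : 'I_M) :
  ((j * M + m)%N == (j' * M + m')%N) = (j == j') && (m == m').
Proof.
apply/eqP/andP => [h|[/eqP -> /eqP ->] //].
have Mp : (0 < M)%N by apply: leq_ltn_trans (ltn_ord m).
have hm : (m : nat) = m'.
  by have := congr1 (modn^~ M) h; rewrite /= !modnMDl !modn_small.
split; apply/eqP/val_inj => //=.
by have := congr1 (divn^~ M) h; rewrite /= !divnMDl // !divn_small // !addn0.
Qed.

Lemma dvBp (j2 : 'I_E) (m : 'I_M) : inputs y m j2 ->
  map_mx (dv R (nvars M E) (j2 * M + m)) Bp = delta_mx (rxn M j2) (met E m).
Proof.
move=> hin; apply/matrixP => i l; rewrite mxE [in RHS]mxE.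
rewrite -(splitK i) -(splitK l) /rxn /met.
case: (split i) => i'; case: (split l) => l' /=.
- rewrite block_mxEul eq_lshift eq_lrshift andbF !mxE.
  by case: (i' == l'); rewrite ?mulr1n ?mulr0n ?dvN ?dv1 ?dv0 ?oppr0.
- rewrite block_mxEur eq_lshift eq_rshift !mxE.
  case: ifP => hi; last by rewrite dv0; case: eqP => // e1; case: eqP => // e2;
    by move: hi; rewrite e1 e2 hin.
  by rewrite dv_var ?idx_lt // idx_eq; case: (_ && _).
- by rewrite block_mxEdl eq_rlshift !mxE dv_const.
- by rewrite block_mxEdr eq_rlshift mxE dv0.
Qed.

Lemma T_poly (j1 j2 : 'I_E) beta : j1 != j2 ->
  \adj Bp (rxn M j2) (rxn M j1) != 0 -> \adj Bp beta (rxn M j2) != 0 ->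
  \adj Bp beta (rxn M j1) != 0.
Proof.
move=> ne h12 h2b; apply/negP => /eqP hb.
have hm : forall m, inputs y m j2 -> \adj Bp (met E m) (rxn M j1) = 0.
  move=> m hin.
  have := @adj_deriv _ _ (@dv0 R _ _) (@dvD R _ _) (@dvM R _ _) _ _ _ _ (@dvBp j2 m hin) _ _ hb.
  by move/eqP; rewrite mulf_eq0 (negbTE h2b) /= => /eqP.
have := congr1 (fun X : 'M[mpoly R (nvars M E)]_(E + M) => X (rxn M j2) (rxn M j1)) (mul_mx_adj Bp).
rewrite /= [RHS]mxE /rxn eq_lshift eq_sym (negbTE ne) mulr0n.
rewrite mxE big_split_ord /=.
rewrite [X in _ + X = _]big1 ?addr0; last first.
  move=> m _; rewrite block_mxEur mxE; case: ifP => hin; last by rewrite mul0r.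
  by rewrite -/(met E m) hm ?mulr0.
rewrite (bigD1 j2) //= big1 ?addr0; last first.
  by move=> k nk; rewrite block_mxEul !mxE eq_sym (negbTE nk) mulr0n oppr0 mul0r.
rewrite block_mxEul !mxE eqxx mulr1n mulN1r => /eqP; rewrite oppr_eq0.
by move: h12; rewrite mxE /rxn => /negbTE ->.
Qed.

Lemma T_infl (j1 j2 : 'I_E) b : regular y ybar -> inflEE y ybar j1 j2 ->
  influences y ybar (rxn M j2) b -> influences y ybar (rxn M j1) b.
Proof.
move=> reg; case: (eqVneq j1 j2) => [-> _ h|ne]; first exact h.
rewrite /inflEE !infl_adj //; exact: T_poly.
Qed.

End Net.


Set Implicit Arguments.
Unset Strict Implicit.
Section CombG.
Variables (M E : nat) (f : 'I_E -> 'I_E -> bool) (g : 'I_E -> 'I_M -> bool).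
Hypothesis ftr : forall a b c, f a b -> f b c -> f a c.
Hypothesis gtr : forall a b m, f a b -> g b m -> g a m.
Definition apG (a b : 'I_E) := (a == b) || f a b && f b a.
Definition clsG a : {set 'I_E} := [set j' | apG a j'].
Definition prcG (p q : {set 'I_E}) := (p != q) && [exists j in p, exists j' in q, f j j'].
Definition IMG j : {set 'I_M} := [set m | g j m].
Definition MndG js : {set 'I_M} :=
  [set m | [exists j', [&& j' \notin clsG js, f js j' & g j' m]]].
Definition MdG js := IMG js :\: MndG js.
Local Notation ap := apG.
Local Notation cls := clsG.
Local Notation prc := prcG.

Set Implicit Arguments.
Unset Strict Implicit.

Lemma ap_refl a : ap a a.
Proof. by rewrite /apG eqxx. Qed.

Lemma ap_sym a b : ap a b = ap b a.
Proof. by rewrite /apG eq_sym andbC. Qed.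

Lemma ap_trans b a c : ap a b -> ap b c -> ap a c.
Proof.
rewrite /apG; case: (eqVneq a b) => [-> //|_] /= /andP[fab fba].
case: (eqVneq b c) => [<-|_] /=; first by rewrite fab fba orbT.
move=> /andP[fbc fcb]; by rewrite (ftr fab fbc) (ftr fcb fba) orbT.
Qed.

Lemma ap_f a b : ap a b -> a != b -> f a b.
Proof. by rewrite /apG => /orP[/eqP ->|/andP[]//]; rewrite eqxx. Qed.

Lemma ap_reach a b : ap a b -> (a == b) || f a b.
Proof. by rewrite /apG => /orP[->//|/andP[->]]; rewrite orbT. Qed.

Lemma reach_f a b c d : (a == b) || f a b -> f b c -> (c == d) || f c d -> f a d.
Proof.
case/orP=> [/eqP ->|fab] fbc; case/orP=> [/eqP <-|fcd].
- exact: fbc.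
- exact: ftr fbc fcd.
- exact: ftr fab fbc.
- exact: ftr (ftr fab fbc) fcd.
Qed.

Lemma reach_f1 a b c : (a == b) || f a b -> f b c -> f a c.
Proof. case/orP=> [/eqP ->|fab] fbc; [exact: fbc | exact: ftr fab fbc]. Qed.

Lemma f_reach a b c : f a b -> (b == c) || f b c -> f a c.
Proof. move=> fab; case/orP=> [/eqP <-|fbc]; [exact: fab | exact: ftr fab fbc]. Qed.

Lemma cls_mem a x : (x \in cls a) = ap a x.
Proof. by rewrite inE. Qed.

Lemma cls_eq a b : ap a b -> cls a = cls b.
Proof.
move=> hab; apply/setP => x; rewrite !cls_mem.
apply/idP/idP => h; first by apply: ap_trans h; rewrite ap_sym.
exact: ap_trans hab h.
Qed.

Lemma in_cls_eq a x : x \in cls a -> cls x = cls a.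
Proof. by rewrite cls_mem => h; apply/esym/cls_eq. Qed.



Lemma ap_of_cls j0 a b : a \in cls j0 -> b \in cls j0 -> ap a b.
Proof.
rewrite !cls_mem => ha hb; apply: (ap_trans (b := j0)) hb.
by rewrite ap_sym.
Qed.

Lemma partb j0 : (2 <= #|cls j0|)%N ->
  forall j j', j \in cls j0 -> j' \in cls j0 -> f j j'.
Proof.
move=> /card_gt1P [x [z [hx hz nxz]]] j j' hj hj'.
case: (eqVneq j j') => [<-|ne]; last exact: ap_f (ap_of_cls hj hj') ne.
have [k hk nk] : exists2 k, k \in cls j0 & k != j.
  case: (eqVneq x j) => [ex|nx]; last by exists x.
  by exists z => //; rewrite -ex eq_sym.
have ajk := ap_of_cls hj hk.
have fjk : f j k by apply: ap_f ajk _; rewrite eq_sym.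
have fkj : f k j.
  by apply: ap_f; [rewrite ap_sym | exact: nk].
exact (ftr fjk fkj).
Qed.

Lemma not_ap_f a b : f a b -> ~~ ap a b -> ~~ f b a.
Proof.
move=> fab; apply: contra => fba; apply/orP; right; apply/andP; split.
  exact: fab.
exact: fba.
Qed.

Lemma partc1 j1 j2 : f j1 j2 -> ~~ ap j1 j2 ->
  forall j1' j2', ap j1' j1 -> ap j2' j2 -> f j1' j2' && ~~ f j2' j1'.
Proof.
move=> f12 nap j1' j2' a1 a2.
have r1 := ap_reach a1.
have r2 : (j2 == j2') || f j2 j2' by apply: ap_reach; rewrite ap_sym.
apply/andP; split; first exact (reach_f r1 f12 r2).
apply/negP => f21.
have r1' : (j1' == j1) || f j1' j1 := r1.
have r2' : (j2 == j2') || f j2 j2' := r2.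
have := reach_f r2' f21 r1'.
by move/negP: (not_ap_f f12 nap).
Qed.

Lemma prc_witness p q : prc p q ->
  exists a, exists2 b, [/\ a \in p, b \in q & f a b] & p != q.
Proof.
rewrite /prcG => /andP[ne /existsP[a /andP[ha /existsP[b /andP[hb fab]]]]].
by exists a; exists b.
Qed.

Lemma prc_trans j1 j2 j3 : prc (cls j1) (cls j2) -> prc (cls j2) (cls j3) ->
  prc (cls j1) (cls j3).
Proof.
move=> /prc_witness [a [b [ha hb fab] n12]] /prc_witness [c [d [hc hd fcd] n23]].
have fbd := reach_f1 (ap_reach (ap_of_cls hb hc)) fcd.
have fad := ftr fab fbd.
rewrite /prcG; apply/andP; split.
  apply/negP => /eqP e.
  have hd1 : d \in cls j1 by rewrite e.
  have fba := f_reach fbd (ap_reach (ap_of_cls hd1 ha)).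
  have aab : ap a b by rewrite /apG fab fba orbT.
  have hb1 : b \in cls j1.
    rewrite cls_mem; apply: (ap_trans (b := a)) aab; rewrite -cls_mem; exact ha.
  move/negP: n12; apply; apply/eqP.
  by rewrite -(in_cls_eq hb1) (in_cls_eq hb).
apply/existsP; exists a; rewrite ha /=; apply/existsP; exists d; rewrite hd /=.
exact fad.
Qed.




Lemma partc4 js j' : j' != js -> f js j' = (j' \in cls js) || prc (cls js) (cls j').
Proof.
move=> ne; apply/idP/idP => [fj|].
  case hin: (j' \in cls js); first by [].
  rewrite /= /prcG; apply/andP; split.
    apply/negP => /eqP e; move/negbT: hin; rewrite e cls_mem ap_refl.
    by [].
  apply/existsP; exists js; rewrite cls_mem ap_refl /=.
  apply/existsP; exists j'; rewrite cls_mem ap_refl /=; exact fj.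
case/orP => [h|/prc_witness [a [b [ha hb fab] _]]].
  by apply: ap_f; [rewrite -cls_mem | rewrite eq_sym].
have hjs : js \in cls js by rewrite cls_mem ap_refl.
have hj' : j' \in cls j' by rewrite cls_mem ap_refl.
exact (reach_f (ap_reach (ap_of_cls hjs ha)) fab (ap_reach (ap_of_cls hb hj'))).
Qed.

Lemma partd1 j1 j2 : f j1 j2 -> IMG j2 \subset IMG j1.
Proof.
move=> fj; apply/subsetP => m; rewrite !inE => gm; exact (gtr fj gm).
Qed.

Lemma partd2 j1 j2 : ap j1 j2 -> IMG j1 = IMG j2.
Proof.
case: (eqVneq j1 j2) => [-> //|ne] a12.
have f12 := ap_f a12 ne.
have f21 : f j2 j1 by apply: ap_f; [rewrite ap_sym | rewrite eq_sym].
by apply/eqP; rewrite eqEsubset (partd1 f12) (partd1 f21).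
Qed.

Lemma parte1 js : MndG js \subset IMG js.
Proof.
apply/subsetP => m; rewrite !inE => /existsP [j' /and3P [_ fj gm]].
exact (gtr fj gm).
Qed.

Lemma parte2 js m : g js m =
  (m \in MdG js) ||
  [exists j', [&& j' \notin cls js, f js j' & m \in MdG j']].
Proof.
apply/idP/idP => [gm|]; last first.
  case/orP => [|/existsP [j' /and3P [_ fj]]].
    by case/setDP; rewrite inE.
  case/setDP; rewrite inE => gm _; exact (gtr fj gm).
case hm: (m \in MndG js); last first.
  by rewrite /MdG in_setD hm [m \in IMG js]inE gm.
move: hm; rewrite inE => /existsP [i0 C0].
pose C := fun k => [&& k \notin cls js, f js k & g k m].
pose U := fun k => [set x | (x == k) || f k x].
case: (@arg_minnP _ i0 C (fun k => #|U k|) C0) => k /and3P[nk fk gk] kmin.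
apply/orP; right; apply/existsP; exists k; rewrite nk fk /=.
rewrite /MdG in_setD [m \in IMG k]inE gk andbT.
apply/negP; rewrite inE => /existsP [j'' /and3P [nj'' fkj'' gj'']].
have nj''js : j'' \notin cls js.
  apply/negP; rewrite cls_mem => ajs.
  have ajs' : ap j'' js by rewrite ap_sym.
  have fkjs := f_reach fkj'' (ap_reach ajs').
  have : k \in cls js by rewrite cls_mem /apG fk fkjs orbT.
  by rewrite (negbTE nk).
have Cj : C j'' by rewrite /C nj''js gj'' andbT; exact (ftr fk fkj'').
have := kmin j'' Cj.
have : U j'' \proper U k.
  apply/properP; split.
    apply/subsetP => x; rewrite !inE; case/orP => [/eqP ->|fx].
      by rewrite fkj'' orbT.
    by rewrite (ftr fkj'' fx) orbT.
  exists k; first by rewrite inE eqxx.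
  rewrite inE negb_or; apply/andP; split.
    apply/negP => /eqP e; move: nj''; rewrite -e cls_mem ap_refl; by [].
  apply/negP => fj''k; move: nj''; rewrite cls_mem /apG fkj'' fj''k orbT.
  by [].
move/proper_card => lt le; move: (leq_ltn_trans le lt); rewrite ltnn.
by [].
Qed.

Lemma parte3 js : IMG js =
  MdG js :|: \bigcup_(j' | (j' \notin cls js) && f js j') MdG j'.
Proof.
apply/setP => m; rewrite in_setU inE parte2; congr orb.
apply/existsP/bigcupP => [[j' /and3P [a b c]]|[j' /andP [a b] c]].
  by exists j'; [rewrite a b | exact c].
by exists j'; rewrite a b c.
Qed.


Lemma main_generic :
  [/\ reflexive ap, symmetric ap & transitive ap] /\
  (forall j0 : 'I_E, (2 <= #|cls j0|)%N ->
     forall j j', j \in cls j0 -> j' \in cls j0 -> f j j') /\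
  ((forall j1 j2, f j1 j2 -> ~~ ap j1 j2 ->
      forall j1' j2', ap j1' j1 -> ap j2' j2 ->
        f j1' j2' && ~~ f j2' j1') /\
   (forall j, ~~ prc (cls j) (cls j)) /\
   (forall j1 j2 j3, prc (cls j1) (cls j2) -> prc (cls j2) (cls j3) ->
      prc (cls j1) (cls j3)) /\
   (forall js j', j' != js ->
      f js j' = (j' \in cls js) || prc (cls js) (cls j'))) /\
  (forall j1 j2, f j1 j2 -> IMG j2 \subset IMG j1) /\
  (forall j1 j2, ap j1 j2 -> IMG j1 = IMG j2) /\
  (forall js : 'I_E,
     MndG js \subset IMG js /\
     (forall m, g js m =
        (m \in MdG js) ||
        [exists j', [&& j' \notin cls js, f js j' & m \in MdG j']]) /\
     IMG js =
       MdG js :|: \bigcup_(j' | (j' \notin cls js) && f js j') MdG j').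
Proof.
split; first split.
- move=> a; exact: ap_refl.
- move=> a b; exact: ap_sym.
- move=> b a c; exact: ap_trans.
split; first exact: partb.
split; first split.
- exact: partc1.
- split; first by move=> j; rewrite /prcG eqxx.
  split; first exact: prc_trans.
  exact: partc4.
split; first exact: partd1.
split; first exact: partd2.
move=> js; split; first exact: parte1.
split; first exact: parte2.
exact: parte3.
Qed.

End CombG.

Theorem theorem2p7 (R : realFieldType) (M E : nat) (y ybar : 'M[R]_(M, E))
  (y_ge0 : forall m j, 0 <= y m j) (ybar_ge0 : forall m j, 0 <= ybar m j)
  (full_rank : \rank (stoich y ybar) = M)
  (reg : regular y ybar) :
  let infl := inflEE y ybar in
  let inflM := inflEM y ybar in
  let appr := approx y ybar in
  let cls := eclass y ybar in
  let prc := prec y ybar in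
  (* (a) *)
  [/\ reflexive appr, symmetric appr & transitive appr] /\
  (* (b) *)
  (forall j0 : 'I_E, (2 <= #|cls j0|)%N ->
     forall j j', j \in cls j0 -> j' \in cls j0 -> infl j j') /\
  (* (c) *)
  ((forall j1 j2, infl j1 j2 -> ~~ appr j1 j2 ->
      forall j1' j2', appr j1' j1 -> appr j2' j2 ->
        infl j1' j2' && ~~ infl j2' j1') /\
   (forall j, ~~ prc (cls j) (cls j)) /\
   (forall j1 j2 j3, prc (cls j1) (cls j2) -> prc (cls j2) (cls j3) ->
      prc (cls j1) (cls j3)) /\
   (forall js j', j' != js ->
      infl js j' = (j' \in cls js) || prc (cls js) (cls j'))) /\
  (* (d) *)
  (forall j1 j2, infl j1 j2 -> IM y ybar j2 \subset IM y ybar j1) /\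
  (forall j1 j2, appr j1 j2 -> IM y ybar j1 = IM y ybar j2) /\
  (* (e) *)
  (forall js : 'I_E,
     Mnd y ybar js \subset IM y ybar js /\
     (forall m, inflM js m =
        (m \in Md y ybar js) ||
        [exists j', [&& j' \notin cls js, infl js j' & m \in Md y ybar j']]) /\
     IM y ybar js =
       Md y ybar js :|: \bigcup_(j' | (j' \notin cls js) && infl js j') Md y ybar j').
Proof.
move=> infl inflM appr cls prc.
have ftrC : forall a b c, inflEE y ybar a b -> inflEE y ybar b c -> inflEE y ybar a c.
  move=> a b c fab fbc; exact (@T_infl R M E y ybar a b (rxn M c) reg fab fbc).
have gtrC : forall a b m, inflEE y ybar a b -> inflEM y ybar b m -> inflEM y ybar a m.
  move=> a b m fab gbm; exact (@T_infl R M E y ybar a b (met E m) reg fab gbm).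
exact (main_generic ftrC gtrC).
Qed.
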